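(* Let $n\ge0$, $r\in\mathcal{Y}_n$ and let $\mathsf{R}\subseteq[n]$ be an admissible set of internal nodes of $r$ (nodes labeled in-order). Then $r|_{\mathsf{R}}=r'_{\mathsf{R}}$ and $r|_{\mathsf{R}^c}=r''_{\mathsf{R}}$.
   Context: Permutations in one-line notation; $\mathrm{st}$ standardizes sequences of distinct integers. For $\sigma\in\mathfrak{S}_p,\tau\in\mathfrak{S}_q$, $\sigma\vee\tau=(\sigma(1)+q,..,\sigma(p)+q,p+q+1,\tau(1),..,\tau(q))$. Trees: $\mathcal{Y}_n$ = rooted planar binary trees with $n$ internal nodes, $\mathcal{Y}_0=\{|\}$; $s\vee t$ = root with left subtree $s$, right subtree $t$; $|\backslash t=t$, $s\backslash t=s_l\vee(s_r\backslash t)$. $\lambda(\mathrm{id}_0)=|$, $\lambda(\sigma)=\lambda(\mathrm{st}(\sigma(1..j-1)))\vee\lambda(\mathrm{st}(\sigma(j+1..n)))$ where $j=\sigma^{-1}(n)$; $\gamma(|)=\mathrm{id}_0$, $\gamma(t)=\gamma(t_l)\vee\gamma(t_r)$. For $\mathsf{R}=\{R_1<..<R_p\}\subseteq[n]$: $\rho|_{\mathsf{R}}=\mathrm{st}(\rho(R_1),..,\rho(R_p))$ and $r|_{\mathsf{R}}=\lambda(\gamma(r)|_{\mathsf{R}})$; $\mathsf{R}^c=[n]\setminus\mathsf{R}$. In-order labeling: if $r=s\vee t$ with $s\in\mathcal{Y}_{j-1}$, the root is labeled $j$, nodes of $s$ keep their labels, nodes of $t$ get their labels increased by $j$. $\mathsf{R}$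 is admissible if for each $x\in\mathsf{R}$ the left child of $x$ and all its internal descendants lie in $\mathsf{R}$. Pruning: cut every edge joining a node of $\mathsf{R}$ to a node not in $\mathsf{R}$; the pieces containing nodes of $\mathsf{R}$ are planar binary trees $r_1,..,r_p$ ordered left to right by the positions of their leaves, and $r'_{\mathsf{R}}=r_1\backslash\cdots\backslash r_p$; the remaining pieces are assembled into $r''_{\mathsf{R}}$ by grafting each piece onto the leaf, of the piece immediately below it, that lies below its root. Equivalently, recursively: $|'=|''=|$; for $r=s\vee t$, $\mathsf{S}=\mathsf{R}\cap s$, $\mathsf{T}=\mathsf{R}\cap t$: if the root is in $\mathsf{R}$, $r'_{\mathsf{R}}=s\vee t'_{\mathsf{T}}$, $r''_{\mathsf{R}}=t''_{\mathsf{T}}$; otherwise $r'_{\mathsf{R}}=s'_{\mathsf{S}}\backslash t'_{\mathsf{T}}$, $r''_{\mathsf{R}}=s''_{\mathsf{S}}\vee t''_{\mathsf{T}}$. *)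

(* Defs.v *)
From mathcomp Require Import all_boot.
Set Implicit Arguments. Unset Strict Implicit. Unset Printing Implicit Defensive.

(* Permutations in one-line notation: seq nat with values 1..n. *)

Definition st (s : seq nat) : seq nat :=
  [seq (count (fun y => y < x) s).+1 | x <- s].

Definition perm_vee (sigma tau : seq nat) : seq nat :=
  [seq x + size tau | x <- sigma] ++ (size sigma + size tau).+1 :: tau.

(* Rooted planar binary trees; the size is the number of internal nodes. *)
Inductive tree : Type := Leaf | Node of tree & tree.

Fixpoint nnodes (t : tree) : nat :=
  match t with Leaf => 0 | Node l r => (nnodes l + nnodes r).+1 end.

Fixpoint under (s t : tree) : tree :=
  match s with Leaf => t | Node sl sr => Node sl (under sr t) end.

Fixpoint lam_aux (k : nat) (s : seq nat) : tree :=
  match k with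
  | 0 => Leaf
  | k'.+1 =>
      if s is [::] then Leaf else
      let j := index (size s) s in   (* j-1 = sigma^{-1}(n) - 1, 0-based *)
      Node (lam_aux k' (st (take j s))) (lam_aux k' (st (drop j.+1 s)))
  end.

Definition lambda (s : seq nat) : tree := lam_aux (size s) s.

Fixpoint gamma (t : tree) : seq nat :=
  match t with Leaf => [::] | Node l r => perm_vee (gamma l) (gamma r) end.

(* rho|_R = st(rho(R_1),...,rho(R_p)), R_1 < ... < R_p, positions 1-based *)
Definition restrp (rho : seq nat) (R : seq nat) : seq nat :=
  st [seq nth 0 rho i.-1 | i <- iota 1 (size rho) & i \in R].

Definition restrt (r : tree) (R : seq nat) : tree := lambda (restrp (gamma r) R).

Definition compl (n : nat) (R : seq nat) : seq nat :=
  [seq i <- iota 1 n | i \notin R].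

(* In-order labeling of the subtree t whose labels start at o+1:
   for t = Node l r the root gets label o + nnodes l + 1, l gets labels
   o+1..o+nnodes l, r gets labels shifted by o + nnodes l + 1. *)

Fixpoint admissible_aux (R : seq nat) (o : nat) (t : tree) : bool :=
  match t with
  | Leaf => true
  | Node l r =>
      let x := o + nnodes l + 1 in
      [&& (x \in R) ==> all (fun y => y \in R) (iota o.+1 (nnodes l)),
          admissible_aux R o l & admissible_aux R x r]
  end.

Definition admissible (r : tree) (R : seq nat) : bool := admissible_aux R 0 r.

Fixpoint prune1_aux (R : seq nat) (o : nat) (t : tree) : tree :=
  match t with
  | Leaf => Leaf
  | Node l r =>
      let x := o + nnodes l + 1 in
      if x \in R then Node l (prune1_aux R x r)
      else under (prune1_aux R o l) (prune1_aux R x r)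
  end.

Fixpoint prune2_aux (R : seq nat) (o : nat) (t : tree) : tree :=
  match t with
  | Leaf => Leaf
  | Node l r =>
      let x := o + nnodes l + 1 in
      if x \in R then prune2_aux R x r
      else Node (prune2_aux R o l) (prune2_aux R x r)
  end.

Definition prune1 (r : tree) (R : seq nat) : tree := prune1_aux R 0 r.
Definition prune2 (r : tree) (R : seq nat) : tree := prune2_aux R 0 r.

(* Main.v *)
Require Import Defs.
From mathcomp Require Import all_boot.
From mathcomp Require Import zify.

Definition mx (s : seq nat) := foldr maxn 0 s.

Lemma mx_ge s x : x \in s -> x <= mx s.
Proof.
elim: s => //= y s IH; rewrite inE => /orP [/eqP -> | /IH]; lia.
Qed.

Lemma mx_in s : s != [::] -> mx s \in s.
Proof.
elim: s => // y [|z s] IH _; first by rewrite /mx /= maxn0 inE.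
have E : mx (y :: z :: s) = maxn y (mx (z :: s)) by [].
rewrite E inE; have := IH isT.
rewrite /maxn; case: ifP => _ H; [by rewrite H orbT | by rewrite eqxx].
Qed.

Lemma mx_cat a b : mx (a ++ b) = maxn (mx a) (mx b).
Proof. by elim: a => [|y a IH] /=; [rewrite max0n | rewrite IH maxnA]. Qed.

Lemma mx_add c s : s != [::] -> mx (map (addn^~ c) s) = mx s + c.
Proof.
elim: s => //= y [|z s] IH _; first by rewrite /= !maxn0.
by rewrite IH // addn_maxl.
Qed.

Fixpoint shp_aux (k : nat) (s : seq nat) : tree :=
  match k with
  | 0 => Leaf
  | k'.+1 =>
      if s is [::] then Leaf else
      let j := index (mx s) s in
      Node (shp_aux k' (take j s)) (shp_aux k' (drop j.+1 s))
  end.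

Definition shp s := shp_aux (size s) s.

Lemma index_mx_lt s : s != [::] -> index (mx s) s < size s.
Proof. by move=> H; rewrite index_mem mx_in. Qed.

Lemma shp_auxS k s : s != [::] -> shp_aux k.+1 s =
  Node (shp_aux k (take (index (mx s) s) s)) (shp_aux k (drop (index (mx s) s).+1 s)).
Proof. by case: s. Qed.

Lemma shp_aux_fuel k1 k2 s : size s <= k1 -> size s <= k2 -> shp_aux k1 s = shp_aux k2 s.
Proof.
elim: k1 k2 s => [|k IH] k2 s H1 H2; first by case: s H1 H2 => //; case: k2.
case: (eqVneq s [::]) => [->|sn]; first by case: k2 H2.
have Hj := index_mx_lt _ sn.
case: k2 H2 => [|k2] H2; first by move: sn H2; rewrite -size_eq0; case: (size s).
rewrite !shp_auxS //; congr Node; apply: IH; rewrite ?size_take ?size_drop ?Hj. all: try lia. all: by rewrite -ltnS (leq_trans Hj).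
Qed.

Lemma shp_auxE k s : size s <= k -> shp_aux k s = shp s.
Proof. by move=> H; apply: shp_aux_fuel. Qed.

Lemma shpE s : s != [::] ->
  shp s = Node (shp (take (index (mx s) s) s)) (shp (drop (index (mx s) s).+1 s)).
Proof.
move=> sn; have Hj := index_mx_lt _ sn.
case Hm: (size s) => [|m]; first by move: sn; rewrite -size_eq0 Hm.
rewrite /shp {1}Hm shp_auxS // !shp_auxE ?size_take ?size_drop ?Hj //; rewrite Hm in Hj *; lia.
Qed.

Lemma shp_nil : shp [::] = Leaf. Proof. by []. Qed.

Lemma shp_add c s : shp (map (addn^~ c) s) = shp s.
Proof.
move: {2}(size s) (leqnn (size s)) => n; elim: n s => [|n IH] s Hs.
  by case: s Hs.
case: (eqVneq s [::]) => [->//|sn].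
have sn' : map (addn^~ c) s != [::] by rewrite -size_eq0 size_map size_eq0.
have Hj := index_mx_lt _ sn.
rewrite (shpE _ sn') (shpE _ sn) mx_add // (index_map (@addIn c)).
rewrite -map_take -map_drop !IH // ?size_take ?size_drop ?Hj. all: try lia. by rewrite -ltnS (leq_trans Hj).
Qed.

Lemma mx_le s M : all (fun x => x <= M) s -> mx s <= M.
Proof. elim: s => //= y s IH /andP [H1 H2]; rewrite geq_max H1 IH //. Qed.

Lemma shp_mid A M B : all (fun x => x < M) A -> all (fun x => x < M) B ->
  shp (A ++ M :: B) = Node (shp A) (shp B).
Proof.
move=> HA HB.
have HM : mx (A ++ M :: B) = M.
  rewrite mx_cat /=.
  have h1 : mx A <= M by apply: mx_le; apply: sub_all HA => x /ltnW.
  have h2 : mx B <= M by apply: mx_le; apply: sub_all HB => x /ltnW.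
  lia.
have MA : M \notin A by apply/negP => /(allP HA); rewrite ltnn.
rewrite shpE; last by case: A {HA MA HM}.
rewrite HM index_cat (negbTE MA) /= eqxx addn0.
rewrite take_size_cat // -addn1 drop_cat ltnNge leq_addr /=.
have -> : size A + 1 - size A = 1 by lia.
by rewrite /= drop0.
Qed.

Lemma shp_cat A B : (forall a b, a \in A -> b \in B -> b < a) ->
  shp (A ++ B) = under (shp A) (shp B).
Proof.
move: {2}(size A) (leqnn (size A)) => n; elim: n A => [|n IH] A Hs HAB.
  by case: A Hs HAB.
case: (eqVneq A [::]) => [->//|An].
have ABn : A ++ B != [::] by move: An; case: A {Hs HAB}.
have Hj := index_mx_lt _ An.
have HM : mx (A ++ B) = mx A.
  rewrite mx_cat; case: (eqVneq B [::]) => [->|Bn]; first by rewrite maxn0.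
  have := HAB _ _ (mx_in _ An) (mx_in _ Bn); lia.
rewrite (shpE _ ABn) (shpE _ An) /= HM index_cat mx_in // take_cat drop_cat Hj.
have -> : (index (mx A) A).+1 < size A = ((index (mx A) A).+1 < size A) by [].
case: ifP => H.
  rewrite IH ?size_drop //; first lia.
  by move=> a b /mem_drop; apply: HAB.
have -> : (index (mx A) A).+1 - size A = 0 by lia.
have -> : drop (index (mx A) A).+1 A = [::] by apply/eqP; rewrite -size_eq0 size_drop; lia.
by rewrite drop0 shp_nil.
Qed.

Lemma size_gamma t : size (gamma t) = nnodes t.
Proof. elim: t => //= l IHl r IHr; rewrite /perm_vee size_cat /= size_map IHl IHr; lia. Qed.

Lemma gamma_bnd t x : x \in gamma t -> 0 < x <= nnodes t.
Proof.
elim: t x => //= l IHl r IHr x.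
rewrite /perm_vee mem_cat inE !size_gamma => /orP [/mapP [y /IHl Hy ->]|/orP [/eqP ->|/IHr]]; lia.
Qed.

Lemma uniq_gamma t : uniq (gamma t).
Proof.
elim: t => //= l IHl r IHr.
rewrite /perm_vee cat_uniq /= IHr (map_inj_uniq (@addIn _)) IHl andbT /=.
rewrite !size_gamma; apply/andP; split.
  apply/negP => /orP [/mapP [y /gamma_bnd Hy E]|/hasP [x /gamma_bnd H1 /mapP [y /gamma_bnd H2 E]]]; lia.
by apply/negP => /gamma_bnd; lia.
Qed.

Lemma shp_gamma t : shp (gamma t) = t.
Proof.
elim: t => //= l IHl r IHr.
rewrite /perm_vee shp_mid ?shp_add ?IHl ?IHr //.
  by apply/allP => x /mapP [y /gamma_bnd Hy ->]; rewrite !size_gamma; lia.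
by apply/allP => x /gamma_bnd Hy; rewrite !size_gamma; lia.
Qed.

Definition MR (R : seq nat) o n := [seq i \in R | i <- iota o.+1 n].

Lemma MR_node R o nl nr :
  MR R o (nl + nr).+1 = MR R o nl ++ (o + nl + 1 \in R) :: MR R (o + nl + 1) nr.
Proof.
rewrite /MR -addnS iotaD map_cat /=.
by have -> : o.+1 + nl = o + nl + 1 by lia.
Qed.

Lemma size_MR R o n : size (MR R o n) = n.
Proof. by rewrite size_map size_iota. Qed.

Lemma MR_all R o n : all (fun y => y \in R) (iota o.+1 n) -> MR R o n = nseq n true.
Proof.
have E : forall s : seq nat, all (fun y => y \in R) s -> [seq i \in R | i <- s] = nseq (size s) true.
  by elim=> //= y s IH /andP [-> H]; rewrite IH.
by move=> H; rewrite /MR E // size_iota.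
Qed.

Lemma prune_main R o t : admissible_aux R o t ->
  shp (mask (MR R o (nnodes t)) (gamma t)) = prune1_aux R o t /\
  shp (mask (map negb (MR R o (nnodes t))) (gamma t)) = prune2_aux R o t.
Proof.
elim: t o => [|l IHl r IHr] o; first by [].
rewrite [admissible_aux _ _ _]/= [prune1_aux _ _ _]/= [prune2_aux _ _ _]/= [gamma _]/=.
change (nnodes (Node l r)) with (nnodes l + nnodes r).+1.
set x := o + nnodes l + 1.
move=> /and3P [Hx Hl Hr].
have [IH1l IH2l] := IHl o Hl.
have [IH1r IH2r] := IHr x Hr.
rewrite MR_node /perm_vee -/x !size_gamma map_cat /=.
have Hs : size (MR R o (nnodes l)) = size [seq y + nnodes r | y <- gamma l]
  by rewrite size_MR size_map size_gamma.
have Hs' : size (map negb (MR R o (nnodes l))) = size [seq y + nnodes r | y <- gamma l]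
  by rewrite size_map.
rewrite !mask_cat // !mask_cons -!map_mask.
have bA : forall m, all (fun y => y < (nnodes l + nnodes r).+1)
                       [seq y + nnodes r | y <- mask m (gamma l)].
  move=> m; apply/allP => y /mapP [z /mem_mask /gamma_bnd Hz ->]; lia.
have bB : forall m, all (fun y => y < (nnodes l + nnodes r).+1) (mask m (gamma r)).
  move=> m; apply/allP => y /mem_mask /gamma_bnd Hz; lia.
have cAB : forall m m' a b, a \in [seq y + nnodes r | y <- mask m (gamma l)] ->
                        b \in mask m' (gamma r) -> b < a.
  move=> m m' a b /mapP [z /mem_mask /gamma_bnd Hz ->] /mem_mask /gamma_bnd; lia.
case: ifP => xR /=; split.
- rewrite (MR_all _ _ _ (implyP Hx xR)) mask_true ?size_map ?size_gamma //.
  rewrite shp_mid; last exact: bB.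
    congr Node; last exact: IH1r.
    rewrite -[RHS](shp_gamma l); exact: shp_add.
  apply/allP => y /mapP [z /gamma_bnd Hz ->]; lia.
- by rewrite (MR_all _ _ _ (implyP Hx xR)) map_nseq mask_false /= IH2r.
- rewrite shp_cat; last by apply: cAB.
  rewrite -IH1l -IH1r; congr under; exact: shp_add.
- rewrite shp_mid; [|exact: bA|exact: bB]; rewrite -IH2l -IH2r; congr Node; exact: shp_add.
Qed.

Lemma st_map f s : {in s &, forall x y, (f x < f y) = (x < y)} -> st (map f s) = st s.
Proof.
move=> H; rewrite /st -map_comp; apply/eq_in_map => x xs /=; congr S.
by rewrite count_map; apply: eq_in_count => y ys /=; apply: H.
Qed.

Definition rank (s : seq nat) x := (count (fun y => y < x) s).+1.

Lemma stE s : st s = map (rank s) s. Proof. by []. Qed.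

Lemma count_lt_mono s x y : x <= y -> count (fun z => z < x) s <= count (fun z => z < y) s.
Proof. move=> H; elim: s => //= z s IH; case: (ltnP z x); case: (ltnP z y) => //=; lia. Qed.

Lemma count_lt_strict s x y : x < y -> x \in s ->
  count (fun z => z < x) s < count (fun z => z < y) s.
Proof.
move=> H; elim: s => //= z s IH; rewrite inE => /orP [/eqP <-|xs].
  rewrite ltnn H /= add0n add1n ltnS; apply: count_lt_mono; lia.
have := IH xs; case: (ltnP z x); case: (ltnP z y) => //=; lia.
Qed.

Lemma rank_mono s : {in s &, forall x y, (rank s x < rank s y) = (x < y)}.
Proof.
move=> x y xs ys; rewrite /rank ltnS; case: (ltnP x y) => H.
  exact: count_lt_strict.
apply/negbTE; rewrite -leqNgt; exact: count_lt_mono.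
Qed.

Lemma rank_mx u : uniq u -> u != [::] -> rank u (mx u) = size u.
Proof.
move=> uu un; rewrite /rank.
have := count_predC (fun z => z < mx u) u.
have -> : count (predC (fun z => z < mx u)) u = count (pred1 (mx u)) u.
  apply: eq_in_count => y yu /=; have := mx_ge _ _ yu; rewrite -leqNgt; lia.
rewrite count_uniq_mem // mx_in // => <-; by rewrite addn1.
Qed.

Lemma lam_auxS k s : s != [::] -> lam_aux k.+1 s =
  Node (lam_aux k (st (take (index (size s) s) s))) (lam_aux k (st (drop (index (size s) s).+1 s))).
Proof. by case: s. Qed.

Lemma lam_st k u : uniq u -> size u <= k -> lam_aux k (st u) = shp u.
Proof.
elim: k u => [|k IH] u uu Hs; first by case: u uu Hs.
case: (eqVneq u [::]) => [->//|un].
have stn : st u != [::] by rewrite -size_eq0 size_map size_eq0.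
have Hj := index_mx_lt _ un.
have Hi : index (size (st u)) (st u) = index (mx u) u.
  rewrite size_map stE /index find_map; apply: eq_in_find => y yu /=.
  case: (eqVneq y (mx u)) => [->|ne]; first by rewrite rank_mx // eqxx.
  have : y < mx u by have := mx_ge _ _ yu; rewrite leq_eqVlt (negbTE ne).
  rewrite -(rank_mono u _ _ yu (mx_in _ un)) rank_mx // => H.
  by apply/negbTE; rewrite neq_ltn H.
rewrite lam_auxS // Hi (shpE _ un) [st u]stE -map_take -map_drop.
have E1 : st (map (rank u) (take (index (mx u) u) u)) = st (take (index (mx u) u) u).
  by apply: st_map => a b ai bi; apply: rank_mono; [exact: mem_take ai|exact: mem_take bi].
have E2 : st (map (rank u) (drop (index (mx u) u).+1 u)) = st (drop (index (mx u) u).+1 u).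
  by apply: st_map => a b ai bi; apply: rank_mono; [exact: mem_drop ai|exact: mem_drop bi].
rewrite E1 E2 !IH ?take_uniq ?drop_uniq // ?size_take ?size_drop ?Hj; try lia.
all: by rewrite -ltnS (leq_trans Hj).
Qed.

Lemma restrp_mask g R :
  restrp g R = st (mask [seq i \in R | i <- iota 1 (size g)] g).
Proof.
rewrite /restrp filter_mask map_mask; congr st; congr mask.
apply: (eq_from_nth (x0 := 0)); rewrite size_map size_iota // => i Hi.
by rewrite (nth_map 0) ?size_iota // nth_iota.
Qed.

Lemma restrt_shp r R :
  restrt r R = shp (mask [seq i \in R | i <- iota 1 (nnodes r)] (gamma r)).
Proof.
rewrite /restrt restrp_mask size_gamma /lambda size_map.
by apply: lam_st; [apply: mask_uniq; apply: uniq_gamma|].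
Qed.

Theorem lemma8p9 (n : nat) (r : tree) (R : seq nat) :
  nnodes r = n -> {subset R <= iota 1 n} -> admissible r R ->
  restrt r R = prune1 r R /\ restrt r (compl n R) = prune2 r R.
Proof.
move=> Hn _ Ha.
have [H1 H2] := prune_main _ _ _ Ha.
rewrite /prune1 /prune2; split; first by rewrite restrt_shp -H1.
rewrite restrt_shp -H2 /MR -map_comp Hn; congr shp; congr mask.
apply/eq_in_map => i Hi /=.
by rewrite /compl mem_filter Hi andbT.
Qed.
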